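(* Let $T$ be a key with at most $n$ rows. Then $$\sum_{Q}\beta^{|\mathrm{wt}(Q)|-|\mathrm{wt}(T)|}x^{\mathrm{wt}(Q)}=\mathfrak{L}^{(\beta)}_{\mathrm{wt}(\mathrm{cap}_n(T))},$$ where the sum is over reverse set-valued tableaux $Q$ of the same shape as $T$ with $K_-(L(Q))\le T$ entrywise and $\max(Q)\le n$.
   Context: Tableaux are in English convention; $T_c$ is the set of entries of column $c$; $|\mathrm{wt}(T)|$ denotes the number of cells of $T$. A key is a tableau with strictly increasing columns and $T_1\supseteq T_2\supseteq\cdots$. For a key $T$ with at most $n$ rows, $\mathrm{cap}_n(T)$ replaces, in each column, entries larger than $n$ by the largest integers in $[n]$ missing from that column, then sorts each column increasingly. For a tableau with entries in $[n]$, $\mathrm{wt}$ is the weak composition counting occurrences of each $i\in[n]$. A reverse set-valued tableau (RSVT) is a filling of a Young diagram with nonempty finite subsets of $\mathbb{Z}_{>0}$ such that $\min Q(r,c)\ge\max Q(r,c+1)$ and $\min Q(r,c)>\max Q(r+1,c)$; $\max(Q)$ is its largest entry; $\mathrm{wt}(Q)_i$ is the number of cells containing $i$; $L(Q)$ keeps the largest element of each cell. For finite $S,T$, $T\trianglerighteq S$ is obtained by going through $S$ from smallest to largest, each $s$ picking the smallest not-yet-picked $t\in T$ with $t\ge s$, and taking the picked set; $K_-(L(Q))$ is the tableau of the same shape whose column $i$ is $L(Q)_1\trianglerighteq(L(Q)_2\trianglerighteq(\cdots\trianglerighteq L(Q)_i))$ sorted increasingly. For a weak composition $\alpha$ with $n$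 parts, $\mathrm{key}(\alpha)$ is the key whose column $c$ is $\{i:\alpha_i\ge c\}$, $|\alpha|=\sum\alpha_i$, and the Lascoux polynomial is $\mathfrak{L}^{(\beta)}_\alpha=\sum_{Q}\beta^{|\mathrm{wt}(Q)|-|\alpha|}x^{\mathrm{wt}(Q)}$ over RSVTs $Q$ with entries subsets of $[n]$, of the same shape as $\mathrm{key}(\alpha)$, with $K_-(L(Q))\le\mathrm{key}(\alpha)$ entrywise. *)

(* Defs.v *)
From HB Require Import structures.
From mathcomp Require Import all_boot all_order all_algebra.
From mathcomp Require Import mpoly.
Set Implicit Arguments. Unset Strict Implicit. Unset Printing Implicit Defensive.
Import GRing.Theory.
Local Open Scope ring_scope.

(* A tableau is a [seq (seq nat)]: the list of its columns (column 1 first),*)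
(* each column listed top to bottom (English convention).  Entries of keys  *)
(* are positive integers.                                                   *)

Definition tableau := seq (seq nat).

Definition ncells (T : tableau) : nat := sumn (map size T).

Definition is_key (T : tableau) : bool :=
  all (fun col => [&& col != [::], sorted ltn col & all (fun x => 0 < x)%N col]) T
  && sorted (fun a b : seq nat => all (fun x => x \in a) b) T.

Definition nrows (T : tableau) : nat := size (nth [::] T 0).

(* cap_n on one column: entries > n are replaced by the largest integers in
   [n] missing from the column, then the column is sorted increasingly *)
Definition cap_col (n : nat) (C : seq nat) : seq nat :=
  let k := count (fun x => n < x)%N C in
  let keep := [seq x <- C | (x <= n)%N] in
  let missing := [seq j <- iota 1 n | j \notin C] in
  sort leq (keep ++ drop (size missing - k) missing).

Definition cap (n : nat) (T : tableau) : tableau := map (cap_col n) T.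

Definition wt_tab (n : nat) (T : tableau) : seq nat :=
  [seq sumn [seq count_mem i col | col <- T] | i <- iota 1 n].

Definition key (n : nat) (alpha : seq nat) : tableau :=
  [seq [seq i.+1 | i <- iota 0 n & (c <= nth 0 alpha i)%N]
     | c <- iota 1 (foldr maxn 0%N alpha)].

Fixpoint tri_aux (rest : seq nat) (S : seq nat) : seq nat :=
  match S with
  | [::] => [::]
  | s :: S' =>
      match [seq t <- rest | (s <= t)%N] with
      | [::] => tri_aux rest S'
      | t :: _ => t :: tri_aux (rem t rest) S'
      end
  end.
Definition tri (T S : seq nat) : seq nat := tri_aux (sort leq T) (sort leq S).

Fixpoint nest (cols : tableau) : seq nat :=
  match cols with
  | [::] => [::]
  | c :: cs => if cs is [::] then c else tri c (nest cs)
  end.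

Definition Kminus (L : tableau) : tableau :=
  [seq sort leq (nest (take i L)) | i <- iota 1 (size L)].

Definition tab_le (A B : tableau) : bool :=
  (size A == size B) &&
  all2 (fun a b => (size a == size b) && all2 leq a b) A B.

(* A filling is a finite function on the box 'I_n x 'I_(size T)            *)
(* (row r, column c, 0-indexed) with values in {set 'I_n}; the element     *)
(* i : 'I_n stands for the positive integer i+1 (so max(Q) <= n is built   *)
(* in).  Cells outside the shape of T carry the empty set.                  *)

Definition filling (n m : nat) := {ffun 'I_n * 'I_m -> {set 'I_n}}.

Definition in_shape (T : tableau) (r c : nat) : bool :=
  (r < size (nth [::] T c))%N.

Definition is_RSVT (n : nat) (T : tableau) (Q : filling n (size T)) : bool :=
  [forall r : 'I_n, forall c : 'I_(size T),
     (Q (r, c) != set0) == in_shape T r c]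
  && [forall r : 'I_n, forall c : 'I_(size T), forall c' : 'I_(size T),
       (val c' == (val c).+1) ==>
       [forall a in Q (r, c), forall b in Q (r, c'), (val b <= val a)%N]]
  && [forall r : 'I_n, forall r' : 'I_n, forall c : 'I_(size T),
       (val r' == (val r).+1) ==>
       [forall a in Q (r, c), forall b in Q (r', c), (val b < val a)%N]].

Definition cell (n m : nat) (Q : filling n m) (r c : nat) : {set 'I_n} :=
  match (insub r : option 'I_n), (insub c : option 'I_m) with
  | Some r', Some c' => Q (r', c')
  | _, _ => set0
  end.

Definition cell_max (n : nat) (S : {set 'I_n}) : nat :=
  (\max_(i in S) (val i).+1)%N.

Definition Lof (n : nat) (T : tableau) (Q : filling n (size T)) : tableau :=
  [seq [seq cell_max (cell Q r c) | r <- iota 0 (size (nth [::] T c))]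
     | c <- iota 0 (size T)].

Definition wtQ (n m : nat) (Q : filling n m) (i : 'I_n) : nat :=
  #|[set rc : 'I_n * 'I_m | i \in Q rc]|.

Definition totwt (n m : nat) (Q : filling n m) : nat :=
  (\sum_(i < n) wtQ Q i)%N.

Definition xmon (R : comRingType) (n m : nat) (Q : filling n m) : {mpoly R[n]} :=
  \prod_(i < n) 'X_i ^+ wtQ Q i.

Definition rsvt_sum (R : comRingType) (n : nat) (beta : R) (T : tableau)
    (d : nat) : {mpoly R[n]} :=
  \sum_(Q : filling n (size T) | is_RSVT Q && tab_le (Kminus (Lof Q)) T)
     (beta ^+ (totwt Q - d)) *: xmon R Q.

Definition lascoux (R : comRingType) (n : nat) (beta : R) (alpha : seq nat)
    : {mpoly R[n]} :=
  rsvt_sum n beta (key n alpha) (sumn alpha).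

(* Main.v *)
Require Import Defs.
From mathcomp Require Import all_boot all_algebra mpoly.
From mathcomp Require Import zify.
Set Implicit Arguments. Unset Strict Implicit.

Lemma cnt_nth (S : seq nat) i v : sorted ltn S -> i < size S ->
  (nth 0 S i < v) = (i < count (fun x => x < v) S).
Proof.
elim: S i => [|a S IH] i //= Hs Hi.
have Hall := order_path_min ltn_trans Hs.
have Hs' := path_sorted Hs.
have E0 : ~~ (a < v) -> count (fun x => x < v) S = 0.
  move=> Hav; apply/eqP; rewrite -leqn0 leqNgt -has_count; apply/hasPn => x Hx.
  have H2 : a < x by exact: (allP Hall x Hx).
  by rewrite -leqNgt (leq_trans _ (ltnW H2)) // leqNgt.
case: i Hi => [|i] Hi /=.
  by case: (ltnP a v) => H //=; rewrite E0 // -leqNgt.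
case: (ltnP a v) => H /=.
  by rewrite add1n ltnS IH.
rewrite E0 ?add0n -?leqNgt //=.
apply/negbTE; rewrite -leqNgt.
have Hm : nth 0 S i \in S by rewrite mem_nth.
by apply: (leq_trans H); apply: ltnW; apply: (allP Hall).
Qed.

Lemma cnt_above (S : seq nat) n w : uniq S -> all (fun x => x <= n) S ->
  count (fun x => w < x) S <= n - w.
Proof.
move=> Hu Ha; rewrite -size_filter.
have -> : n - w = size (iota w.+1 (n - w)) by rewrite size_iota.
apply: uniq_leq_size; first exact: filter_uniq.
move=> x; rewrite mem_filter mem_iota => /andP[H1 H2].
have Hx : x <= n by exact: (allP Ha x H2).
rewrite H1 /=; lia.
Qed.

Lemma cnt_interval (S : seq nat) n w : 0 < w -> w <= n ->
  (forall z, w <= z <= n -> z \in S) ->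
  n.+1 - w <= count (fun x => w <= x) S.
Proof.
move=> H0 Hwn H; rewrite -size_filter.
have -> : n.+1 - w = size (iota w (n.+1 - w)) by rewrite size_iota.
apply: uniq_leq_size; first exact: iota_uniq.
move=> x; rewrite mem_iota => /andP[H1 H2]; rewrite mem_filter H1 /=.
apply: H; rewrite H1 /=; lia.
Qed.


Definition keepC n (C : seq nat) := [seq x <- C | x <= n].
Definition kC n (C : seq nat) := count (fun x => n < x) C.
Definition missC n (C : seq nat) := [seq j <- iota 1 n | j \notin C].
Definition chC n C := drop (size (missC n C) - kC n C) (missC n C).
Definition goodcol n (C : seq nat) :=
  [&& sorted ltn C, all (fun x => 0 < x) C & size C <= n].

Lemma cap_colE n C : cap_col n C = sort leq (keepC n C ++ chC n C).
Proof. by []. Qed.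

Lemma size_keep n C : size (keepC n C) + kC n C = size C.
Proof.
rewrite /keepC /kC size_filter -(count_predC (fun x => x <= n) C).
by congr (_ + _); apply: eq_count => x /=; rewrite ltnNge.
Qed.

Lemma size_miss n C : goodcol n C -> size (missC n C) = n - size (keepC n C).
Proof.
case/and3P => Hs Hp Hsz.
have Hu : uniq C by move: Hs; rewrite ltn_sorted_uniq_leq => /andP[].
rewrite /missC size_filter.
have E : count (fun j => j \in C) (iota 1 n) = size (keepC n C).
  rewrite -size_filter; apply: perm_size; apply: uniq_perm.
  + exact: filter_uniq (iota_uniq _ _).
  + exact: filter_uniq.
  move=> x; rewrite !mem_filter mem_iota andbC; case Hx: (x \in C); rewrite ?andbF //=.
  have := allP Hp x Hx; rewrite andbT /=; lia.
have H := count_predC (fun j => j \in C) (iota 1 n).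
rewrite size_iota E in H.
have H2 : count (fun j => j \notin C) (iota 1 n) = count [predC C] (iota 1 n) by [].
rewrite H2; lia.
Qed.

Lemma k_le_miss n C : goodcol n C -> kC n C <= size (missC n C).
Proof.
move=> G; rewrite size_miss //; have := size_keep n C.
case/and3P: G => _ _ Hsz; lia.
Qed.

Lemma miss_sorted n C : sorted ltn (missC n C).
Proof. by apply: sorted_filter; [exact: ltn_trans | exact: iota_ltn_sorted]. Qed.

Lemma sorted_split (s : seq nat) j x y : sorted ltn s ->
  x \in take j s -> y \in drop j s -> x < y.
Proof.
move=> Hs Hx Hy; move: Hs; rewrite (sorted_pairwise ltn_trans) -{1}(cat_take_drop j s).
rewrite pairwise_cat => /andP[/allrelP H _]; exact: H.
Qed.

Lemma mem_drop_cnt (M : seq nat) k y : sorted ltn M -> k <= size M ->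
  (y \in drop (size M - k) M) = (y \in M) && (count (fun z => y < z) M < k).
Proof.
move=> Hs Hk; set j := size M - k.
have Hsd : size (drop j M) = k by rewrite size_drop /j; lia.
have E : count (fun z => y < z) M =
   count (fun z => y < z) (take j M) + count (fun z => y < z) (drop j M).
  by rewrite -count_cat cat_take_drop.
rewrite -{2}(cat_take_drop j M) mem_cat.
case Hd: (y \in drop j M).
  rewrite orbT /= E.
  have -> : count (fun z => y < z) (take j M) = 0.
    apply/eqP; rewrite -leqn0 leqNgt -has_count; apply/hasPn => z Hz.
    by rewrite -leqNgt ltnW // (sorted_split Hs Hz Hd).
  rewrite add0n -Hsd -(count_predC (fun z => y < z)) -addn1 leq_add2l.
  by symmetry; rewrite -has_count; apply/hasP; exists y => //=; rewrite ltnn.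
rewrite orbF; case Ht: (y \in take j M) => //=.
symmetry; apply/negbTE; rewrite E -leqNgt; apply: leq_trans (leq_addl _ _).
rewrite -Hsd -size_filter; apply/eq_leq; congr size; symmetry.
apply/all_filterP/allP => z Hz; exact: (sorted_split Hs Ht Hz).
Qed.

Lemma mem_ch n C y : goodcol n C ->
  (y \in chC n C) = (y \in missC n C) && (count (fun z => y < z) (missC n C) < kC n C).
Proof.
move=> G; rewrite /chC mem_drop_cnt //; [exact: miss_sorted | exact: k_le_miss].
Qed.

Lemma ch_up n C y z : goodcol n C -> y \in chC n C -> z \in missC n C -> y <= z ->
  z \in chC n C.
Proof.
move=> G; rewrite !mem_ch // => /andP[_ H] Hz Hyz; rewrite Hz /=.
apply: leq_ltn_trans H; apply: sub_count => x /=; lia.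
Qed.

Lemma size_ch n C : goodcol n C -> size (chC n C) = kC n C.
Proof. move=> G; rewrite /chC size_drop; have := k_le_miss G; lia. Qed.

Lemma mem_cap n C x : (x \in cap_col n C) = ((x \in C) && (x <= n)) || (x \in chC n C).
Proof. by rewrite cap_colE mem_sort mem_cat mem_filter andbC. Qed.

Lemma size_cap n C : goodcol n C -> size (cap_col n C) = size C.
Proof. by move=> G; rewrite cap_colE size_sort size_cat size_ch // size_keep. Qed.

Lemma uniq_cap n C : goodcol n C -> uniq (cap_col n C).
Proof.
move=> G; have Hu : uniq C by case/and3P: G; rewrite ltn_sorted_uniq_leq => /andP[].
rewrite cap_colE sort_uniq cat_uniq filter_uniq //=.
rewrite /chC drop_uniq ?filter_uniq ?iota_uniq // andbT.
apply/hasPn => y Hy; rewrite mem_filter negb_and; apply/orP; right.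
have := mem_drop Hy; rewrite /missC mem_filter => /andP[] //.
Qed.

Lemma range_cap n C : goodcol n C -> all (fun x => 0 < x <= n) (cap_col n C).
Proof.
case/and3P=> _ Hp _; apply/allP => x; rewrite mem_cap => /orP[/andP[Hx Hn]|Hx].
  by rewrite Hn (allP Hp x Hx).
by have := mem_drop Hx; rewrite /missC mem_filter mem_iota => /andP[_]; lia.
Qed.

Lemma sorted_cap n C : goodcol n C -> sorted ltn (cap_col n C).
Proof.
move=> G; rewrite ltn_sorted_uniq_leq uniq_cap // cap_colE.
exact: sort_sorted leq_total _.
Qed.


Lemma count_cap n C (P : pred nat) : count P (cap_col n C) =
  count P (keepC n C) + count P (chC n C).
Proof. by rewrite cap_colE -count_cat; apply/permP; rewrite perm_sort. Qed.

Lemma nth_cap n C i : goodcol n C -> i < size C ->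
  nth 0 (cap_col n C) i = minn (nth 0 C i) (n - size C + i.+1).
Proof.
move=> G Hi; have G' := G; case/and3P: G' => Hs Hp Hsz.
set m := size C; set w := minn _ _.
have HsD := sorted_cap G; have HzD := size_cap G; have HuD := uniq_cap G.
have HrD := range_cap G.
have HiD : i < size (cap_col n C) by rewrite HzD.
have HCi : 0 < nth 0 C i by apply: (allP Hp); rewrite mem_nth.
have Hw0 : 0 < w by rewrite /w; lia.
have Hwn : w <= n by rewrite /w; lia.
have Hcnt : forall v, count (fun x => x < v) (cap_col n C) +
            count (fun x => v <= x) (cap_col n C) = m.
  move=> v; rewrite /m -HzD -(count_predC (fun x => x < v)); congr (_ + _).
  by apply: eq_count => x /=; rewrite leqNgt.
apply/eqP; rewrite eqn_leq; apply/andP; split.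
  rewrite -ltnS (cnt_nth _ HsD HiD).
  case: (leqP (nth 0 C i) (n - m + i.+1)) => Hc.
    have -> : w = nth 0 C i by rewrite /w; lia.
    rewrite count_cap; apply: leq_trans (leq_addr _ _).
    rewrite /keepC count_filter.
    have -> : count (fun x => (x < (nth 0 C i).+1) && (x <= n)) C =
              count (fun x => x < (nth 0 C i).+1) C.
      apply: eq_count => x /=; case: (ltnP x (nth 0 C i).+1) => //= H; lia.
    by rewrite -(cnt_nth _ Hs Hi).
  have -> : w = n - m + i.+1 by rewrite /w; lia.
  have H1 := Hcnt (n - m + i.+1).+1.
  have H2 : count (fun x => (n - m + i.+1).+1 <= x) (cap_col n C) <= n - (n - m + i.+1).
    apply: cnt_above => //; apply/allP => x Hx; have := allP HrD x Hx; lia.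
  lia.
rewrite leqNgt (cnt_nth _ HsD HiD) -leqNgt.
have HkC : count (fun x => x < w) (keepC n C) <= i.
  rewrite /keepC count_filter; apply: leq_trans (_ : count (fun x => x < w) C <= i).
    by apply: sub_count => x /= /andP[].
  by rewrite leqNgt -(cnt_nth _ Hs Hi) -leqNgt /w geq_minl.
case Hh: (has (fun x => x < w) (chC n C)); last first.
  move: Hh; rewrite has_count => /negbT; rewrite -leqNgt leqn0 => /eqP H0.
  by rewrite count_cap H0 addn0.
case/hasP: Hh => y Hy Hyw.
have Hint : forall z, w <= z <= n -> z \in cap_col n C.
  move=> z /andP[Hz1 Hz2]; rewrite mem_cap.
  case HzC: (z \in C); first by rewrite Hz2.
  rewrite /= (ch_up G Hy) //; last by lia.
  by rewrite /missC mem_filter HzC mem_iota /=; lia.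
have H3 := cnt_interval Hw0 Hwn Hint.
have H4 := Hcnt w.
have : w <= n - m + i.+1 by rewrite /w geq_minr.
lia.
Qed.


Lemma all2_nth (S1 S2 : Type) (r : S1 -> S2 -> bool) x0 y0 s t :
  size s = size t ->
  all2 r s t = all (fun i => r (nth x0 s i) (nth y0 t i)) (iota 0 (size s)).
Proof.
elim: s t => [|a s IH] [|b t] //= [Hst]; congr (_ && _).
by rewrite IH // -(addn0 1) iotaDl all_map.
Qed.

Lemma sorted_bound (K : seq nat) n i : sorted ltn K -> all (fun x => x <= n) K ->
  i < size K -> nth 0 K i <= n - size K + i.+1.
Proof.
move=> Hs Ha Hi; set v := nth 0 K i.
have Hu : uniq K by move: Hs; rewrite ltn_sorted_uniq_leq => /andP[].
have H1 := cnt_above v Hu Ha.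
have H2 : count (fun x => x < v.+1) K <= i.+1.
  case: (ltnP i.+1 (size K)) => Hi1.
    rewrite leqNgt -(cnt_nth v.+1 Hs Hi1) -leqNgt /v.
    apply: (sorted_ltn_nth ltn_trans 0 Hs); rewrite ?inE //; lia.
  by apply: leq_trans (count_size _ _) _; lia.
have H3 : count (fun x => x < v.+1) K + count (fun x => v < x) K = size K.
  rewrite -(count_predC (fun x => x < v.+1)); congr (_ + _).
  by apply: eq_count => x /=; rewrite ltnNge.
have Hvn : v <= n by apply: (allP Ha); rewrite mem_nth.
lia.
Qed.

Lemma col_le n C K : goodcol n C -> sorted ltn K -> all (fun x => x <= n) K ->
  ((size K == size C) && all2 leq K C) =
  ((size K == size (cap_col n C)) && all2 leq K (cap_col n C)).
Proof.
move=> G Hs Ha; rewrite size_cap //.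
case: eqP => //= HK.
rewrite (all2_nth leq 0 0 HK) (all2_nth leq 0 0 (etrans HK (esym (size_cap G)))).
apply: eq_in_all => i; rewrite mem_iota add0n => /andP[_ Hi].
rewrite nth_cap -?HK // leq_min.
by rewrite (sorted_bound Hs Ha Hi) andbT.
Qed.


Lemma goodcol_uniq n C : goodcol n C -> uniq C.
Proof. by case/and3P; rewrite ltn_sorted_uniq_leq => /andP[]. Qed.

Lemma cap_sub n A B : goodcol n A -> goodcol n B -> {subset B <= A} ->
  {subset cap_col n B <= cap_col n A}.
Proof.
move=> GA GB HBA x; rewrite !mem_cap => /orP[/andP[HxB Hxn]|Hch].
  by rewrite (HBA x HxB) Hxn.
have HmB := mem_drop Hch; move: (HmB); rewrite /missC mem_filter mem_iota => /andP[HxnB Hxr].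
case HxA: (x \in A); first by rewrite /=; lia.
rewrite /= mem_ch // /missC mem_filter HxA mem_iota Hxr /=.
move: Hch; rewrite mem_ch // => /andP[_ Hlt].
apply: leq_ltn_trans (_ : _ <= count (fun z => x < z) (missC n B)) _.
  rewrite /missC !count_filter; apply: sub_count => j /= /andP[H1 H2].
  by rewrite H1 /=; apply/negP => /HBA; rewrite (negbTE H2).
apply: leq_trans Hlt _; rewrite /kC -!size_filter; apply: uniq_leq_size.
  by apply: filter_uniq; exact: goodcol_uniq GB.
by move=> y; rewrite !mem_filter => /andP[-> /HBA].
Qed.


Definition keyrel (a b : seq nat) := all (fun x => x \in a) b.

Lemma keyrel_trans : transitive keyrel.
Proof.
move=> b a c /allP Hab /allP Hbc; apply/allP => x Hx; exact: Hab (Hbc x Hx).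
Qed.

Lemma count_nested (K : seq (seq nat)) x c : sorted keyrel K -> 0 < c ->
  (c <= count (fun col => x \in col) K) = (x \in nth [::] K c.-1).
Proof.
elim: K c => [|a K IH] c Hs Hc /=.
  by rewrite nth_nil in_nil leqNgt Hc.
have Hall := order_path_min keyrel_trans Hs.
have Hs' := path_sorted Hs.
case Hxa: (x \in a) => /=.
  case: c Hc => [|[|c]] Hc //=.
  by rewrite add1n ltnS IH.
have E0 : count (fun col => x \in col) K = 0.
  apply/eqP; rewrite -leqn0 leqNgt -has_count; apply/hasPn => col Hcol.
  apply/negP => Hx; have := allP (allP Hall col Hcol) x Hx; rewrite Hxa.
  done.
rewrite E0 add0n leqn0; case: c Hc => [|c] Hc //=; case: c Hc => [|c] Hc //=.
case Hlt: (c < size K).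
  apply/esym/negP => Hx; have := allP (allP Hall _ (mem_nth [::] Hlt)) x Hx.
  by rewrite Hxa.
by rewrite nth_default // leqNgt Hlt.
Qed.

Lemma sumn_count_mem (K : seq (seq nat)) x : all uniq K ->
  sumn [seq count_mem x col | col <- K] = count (fun col => x \in col) K.
Proof.
elim: K => [|a K IH] //= /andP[Ha HK]; by rewrite IH // count_uniq_mem.
Qed.

Lemma foldr_max_eq (s : seq nat) N : all (fun x => x <= N) s -> (N = 0 \/ N \in s) ->
  foldr maxn 0 s = N.
Proof.
elim: s => [|a s IH] /=; first by move=> _ [] // ->.
move=> /andP[Ha Hs] H.
case: H => [H0|]; first by rewrite IH //; [rewrite H0 in Ha *; lia | left].
rewrite in_cons => /orP[/eqP EN|Hin].
  have H1 : foldr maxn 0 s <= N.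
    clear IH; elim: s Hs => [|b s IH2] //= /andP[Hb Hs]; rewrite geq_max Hb IH2 //.
  by rewrite EN in H1 *; apply/maxn_idPl.
by rewrite IH //; [apply/maxn_idPr | right].
Qed.

Definition goodkey n (K : seq (seq nat)) :=
  all (fun col => [&& sorted ltn col, all (fun x => 0 < x <= n) col & col != [::]]) K
  && sorted keyrel K.

Lemma key_wt n K : goodkey n K -> key n (wt_tab n K) = K.
Proof.
case/andP => Hcols Hs.
have Huq : all uniq K.
  apply/allP => col Hc; have := allP Hcols col Hc.
  by case/and3P; rewrite ltn_sorted_uniq_leq => /andP[].
have Hsz : size (wt_tab n K) = n by rewrite /wt_tab size_map size_iota.
have Ha : forall i, i < n -> nth 0 (wt_tab n K) i = count (fun col => i.+1 \in col) K.
  move=> i Hi; rewrite /wt_tab (nth_map 0) ?size_iota // nth_iota // add1n.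
  exact: sumn_count_mem.
have Hmax : foldr maxn 0 (wt_tab n K) = size K.
  apply: foldr_max_eq.
    apply/allP => a /(nthP 0) [i Hi <-]; rewrite Hsz in Hi; rewrite (Ha i Hi); exact: count_size.
  case HK: K => [|col0 K'] ; first by left.
  right; rewrite -HK.
  have HK0 : 0 < size K by rewrite HK.
  have Hl : nth [::] K (size K).-1 \in K by rewrite mem_nth // prednK.
  case/and3P: (allP Hcols _ Hl) => _ Hr Hne.
  case Hc: (nth [::] K (size K).-1) Hne Hr => [|x l] // _ /andP[/andP[Hx0 Hxn] _].
  apply/(nthP 0); exists x.-1; first by rewrite Hsz; lia.
  rewrite Ha; last lia.
  rewrite prednK //; apply/eqP; rewrite eqn_leq count_size /=.
  by rewrite count_nested // Hc in_cons eqxx.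
rewrite /key Hmax.
have -> : iota 1 (size K) = map succn (iota 0 (size K)).
  by rewrite -(addn0 1) iotaDl; apply: eq_map => x; rewrite add1n.
rewrite -map_comp.
transitivity [seq nth [::] K i | i <- iota 0 (size K)]; last by rewrite map_nth_iota0 // take_size.
apply/eq_in_map => c; rewrite mem_iota add0n => /andP[_ Hc].
have HcK : nth [::] K c \in K by rewrite mem_nth.
case/and3P: (allP Hcols _ HcK) => Hsc Hrc _.
apply: (irr_sorted_eq ltn_trans ltnn).
- rewrite sorted_map; apply: sorted_filter; first by move=> ? ? ?; exact: ltn_trans.
  exact: iota_ltn_sorted.
- exact: Hsc.
move=> x; apply/mapP/idP.
  case=> i; rewrite mem_filter mem_iota add0n => /andP[Hci /andP[_ Hi]] ->.
  by rewrite Ha // in Hci; rewrite -[c]/(c.+1.-1) -count_nested.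
move=> Hx; have /andP[Hx0 Hxn] := allP Hrc x Hx.
case: x Hx Hx0 Hxn => [|x] Hx Hx0 Hxn //.
exists x => //.
rewrite mem_filter mem_iota add0n Ha; last lia.
have := @count_nested K x.+1 (c.+1) Hs erefl; rewrite /= Hx => ->; rewrite /=; lia.
Qed.


Definition gR (n m : nat) (T : tableau) (Q : filling n m) : bool :=
  [forall r : 'I_n, forall c : 'I_m,
     (Q (r, c) != set0) == in_shape T r c]
  && [forall r : 'I_n, forall c : 'I_m, forall c' : 'I_m,
       (val c' == (val c).+1) ==>
       [forall a in Q (r, c), forall b in Q (r, c'), (val b <= val a)%N]]
  && [forall r : 'I_n, forall r' : 'I_n, forall c : 'I_m,
       (val r' == (val r).+1) ==>
       [forall a in Q (r, c), forall b in Q (r', c), (val b < val a)%N]].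

Definition gL (n m : nat) (T : tableau) (Q : filling n m) : tableau :=
  [seq [seq cell_max (cell Q r c) | r <- iota 0 (size (nth [::] T c))]
     | c <- iota 0 (size T)].

Definition gsum (R : comRingType) (n : nat) (beta : R) (m : nat) (T : tableau)
    (d : nat) : {mpoly R[n]} :=
  (\sum_(Q : filling n m | gR T Q && tab_le (Kminus (gL T Q)) T)
     (beta ^+ (totwt Q - d)) *: xmon R Q)%R.

Lemma rsvt_sumE (R : comRingType) n (beta : R) T d :
  rsvt_sum n beta T d = gsum n beta (size T) T d.
Proof. by []. Qed.

Lemma size_nth_shape (T : tableau) c : size (nth [::] T c) = nth 0 (map size T) c.
Proof. by elim: T c => [|a T IH] [|c] //=; rewrite nth_nil. Qed.

Lemma gsum_eq (R : comRingType) n (beta : R) m (T1 T2 : tableau) d :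
  map size T1 = map size T2 ->
  (forall Q : filling n m, gR T1 Q ->
     tab_le (Kminus (gL T1 Q)) T1 = tab_le (Kminus (gL T1 Q)) T2) ->
  gsum n beta m T1 d = gsum n beta m T2 d.
Proof.
move=> Hsh H; rewrite /gsum; apply: eq_bigl => Q.
have Es : size T1 = size T2 by rewrite -(size_map size T1) Hsh size_map.
have EL : gL T1 Q = gL T2 Q.
  rewrite /gL Es; apply: eq_map => c; by rewrite !size_nth_shape Hsh.
have ER : gR T1 Q = gR T2 Q.
  rewrite /gR; congr (_ && _ && _); apply: eq_forallb => r; apply: eq_forallb => c.
  by rewrite /in_shape !size_nth_shape Hsh.
case HR: (gR T1 Q) => /=; last by rewrite -ER HR.
by rewrite -ER HR /= H // EL.
Qed.

Lemma cell_max_range n (S : {set 'I_n}) : S != set0 -> 0 < cell_max S <= n.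
Proof.
case/set0Pn => a Ha; apply/andP; split.
  by apply: leq_trans (leq_bigmax_cond _ Ha).
by apply/bigmax_leqP => i _; exact: ltn_ord.
Qed.

Lemma cell_max_lt n (S1 S2 : {set 'I_n}) : S1 != set0 ->
  (forall a b, a \in S1 -> b \in S2 -> val b < val a) -> cell_max S2 < cell_max S1.
Proof.
case/set0Pn => a Ha H.
have H1 : cell_max S2 <= val a by apply/bigmax_leqP => b Hb; exact: H.
apply: leq_ltn_trans H1 _; exact: (leq_bigmax_cond _ Ha).
Qed.

Lemma cellE n m (Q : filling n m) r c (Hr : r < n) (Hc : c < m) :
  cell Q r c = Q (Ordinal Hr, Ordinal Hc).
Proof.
rewrite /cell; case: insubP => [r' _ Er|]; last by rewrite Hr.
case: insubP => [c' _ Ec|]; last by rewrite Hc.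
by congr (Q (_, _)); apply: val_inj.
Qed.

Definition col0Q n m (T : tableau) (Q : filling n m) :=
  [seq cell_max (cell Q r 0) | r <- iota 0 (size (nth [::] T 0))].

Lemma L1_good n m (T : tableau) (Q : filling n m) : gR T Q -> 0 < m ->
  size (nth [::] T 0) <= n ->
  uniq (col0Q T Q) && all (fun x => 0 < x <= n) (col0Q T Q).
Proof.
move=> /andP[/andP[/forallP H1 _] /forallP H3] Hm Hn; rewrite /col0Q.
have Hne : forall r, r < size (nth [::] T 0) -> cell Q r 0 != set0.
  move=> r Hr; have Hrn : r < n by lia.
  rewrite (cellE Q Hrn Hm).
  by move: (forallP (H1 (Ordinal Hrn)) (Ordinal Hm)) => /eqP ->.
apply/andP; split.
  apply: (@sorted_uniq _ gtn).
  - by move=> a b c Hab Hbc; exact: ltn_trans Hbc Hab.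
  - by move=> x; apply/negbTE; rewrite -leqNgt.
  apply/(sortedP 0) => i; rewrite size_map size_iota => Hi.
  rewrite !(nth_map 0) ?size_iota; try lia.
  rewrite !nth_iota; try lia.
  rewrite !add0n; apply: cell_max_lt; first by apply: Hne; lia.
  move=> a b.
  have Hin : i < n by lia.
  have Hin1 : i.+1 < n by lia.
  rewrite (cellE Q Hin Hm) (cellE Q Hin1 Hm) => Ha Hb.
  have := forallP (forallP (H3 (Ordinal Hin)) (Ordinal Hin1)) (Ordinal Hm).
  by rewrite /= eqxx /= => /forall_inP /(_ a Ha) /forall_inP /(_ b Hb).
apply/allP => x /mapP [r]; rewrite mem_iota add0n => /andP[_ Hr] ->.
exact: cell_max_range (Hne r Hr).
Qed.


Lemma tri_aux_ok (S rest : seq nat) : uniq rest ->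
  uniq (tri_aux rest S) /\ {subset tri_aux rest S <= rest}.
Proof.
elim: S rest => [|s S IH] rest Hu /=; first by split.
case Hf: [seq t <- rest | s <= t] => [|t l]; first exact: IH.
have Ht : t \in rest.
  have : t \in [seq t <- rest | s <= t] by rewrite Hf mem_head.
  by rewrite mem_filter => /andP[].
have [IH1 IH2] := IH (rem t rest) (rem_uniq _ Hu).
split.
  rewrite /= IH1 andbT; apply/negP => /IH2; by rewrite mem_rem_uniqF.
move=> x; rewrite in_cons => /orP[/eqP -> //|/IH2]; exact: mem_rem.
Qed.

Lemma tri_ok (A S : seq nat) : uniq A -> uniq (tri A S) /\ {subset tri A S <= A}.
Proof.
move=> Hu; rewrite /tri.
have Hu' : uniq (sort leq A) by rewrite sort_uniq.
have [H1 H2] := tri_aux_ok (sort leq S) Hu'; split => // x /H2; by rewrite mem_sort.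
Qed.

Lemma nest_ok (c : seq nat) cs : uniq c ->
  uniq (nest (c :: cs)) /\ {subset nest (c :: cs) <= c}.
Proof.
move=> Hu; case: cs => [|c' cs] /=; first by split.
exact: tri_ok.
Qed.

Lemma Kminus_cols n (L : tableau) : uniq (head [::] L) ->
  all (fun x => 0 < x <= n) (head [::] L) ->
  all (fun col => sorted ltn col && all (fun x => x <= n) col) (Kminus L).
Proof.
move=> Hu Hr; apply/allP => col /mapP [i]; rewrite mem_iota => /andP[Hi1 Hi2] ->.
case: L Hu Hr Hi2 => [|c L] Hu Hr Hi2 /=; first by lia.
case: i Hi1 Hi2 => [|i] // _ _ /=.
have [H1 H2] := nest_ok (take i L) Hu.
rewrite ltn_sorted_uniq_leq sort_uniq H1 sort_sorted /=; last exact: leq_total.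
apply/allP => x; rewrite mem_sort => /H2 Hx; have := allP Hr x Hx; lia.
Qed.


Lemma all2_map_r (S1 S2 : eqType) (r : S1 -> S2 -> bool) (f : S2 -> S2) s t :
  (forall a b, a \in s -> b \in t -> r a b = r a (f b)) ->
  all2 r s t = all2 r s (map f t).
Proof.
elim: s t => [|a s IH] [|b t] //= H.
rewrite H ?mem_head // IH // => x y Hx Hy; apply: H; rewrite in_cons ?Hx ?Hy orbT //.
Qed.

Lemma tab_le_cap n (K T : tableau) :
  all (fun col => sorted ltn col && all (fun x => x <= n) col) K ->
  all (goodcol n) T -> tab_le K T = tab_le K (cap n T).
Proof.
move=> HK HT; rewrite /tab_le /cap size_map; congr (_ && _).
apply: all2_map_r => a b Ha Hb.
have /andP[H1 H2] := allP HK a Ha.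
exact: col_le (allP HT b Hb) H1 H2.
Qed.

Lemma key_goodcols n T : is_key T -> nrows T <= n -> all (goodcol n) T.
Proof.
case/andP => Hc Hs Hn; apply/allP => col Hcol.
have /and3P[H1 H2 H3] := allP Hc col Hcol.
rewrite /goodcol H2 H3 /=.
case: T Hc Hs Hn Hcol => [|a T] // Hc Hs Hn Hcol.
apply: leq_trans Hn; rewrite /nrows /=.
have Hall := order_path_min keyrel_trans Hs.
move: Hcol; rewrite in_cons => /orP[/eqP -> //|Hcol].
apply: uniq_leq_size.
  by move: H2; rewrite ltn_sorted_uniq_leq => /andP[].
by move=> x Hx; exact: (allP (allP Hall col Hcol)).
Qed.

Lemma shape_cap n T : all (goodcol n) T -> map size (cap n T) = map size T.
Proof.
move=> H; rewrite /cap -map_comp; apply/eq_in_map => col Hc /=.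
exact: size_cap (allP H col Hc).
Qed.

Lemma goodkey_cap n T : is_key T -> nrows T <= n -> goodkey n (cap n T).
Proof.
move=> Hk Hn; have G := key_goodcols Hk Hn.
case/andP: Hk => Hc Hs.
apply/andP; split.
  apply/allP => col /mapP [b Hb ->].
  have Gb := allP G b Hb.
  rewrite sorted_cap // range_cap //= -size_eq0 size_cap // size_eq0.
  by have /and3P[] := allP Hc b Hb.
rewrite /cap sorted_map.
apply: (sub_in_sorted (P := goodcol n)) G Hs => a b Ga Gb Hab.
rewrite /relpre /keyrel; apply/allP => x Hx.
apply: (cap_sub Ga Gb _ Hx) => y Hy; exact: (allP Hab).
Qed.

Lemma sumn_wt n K : goodkey n K -> sumn (wt_tab n K) = ncells K.
Proof.
case/andP => Hc _.
have Hu : all uniq K.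
  apply/allP => col Hcol; have /and3P[H1 _ _] := allP Hc col Hcol.
  by move: H1; rewrite ltn_sorted_uniq_leq => /andP[].
rewrite /wt_tab /ncells.
have -> : [seq sumn [seq count_mem i col | col <- K] | i <- iota 1 n] =
          [seq count (fun col => i \in col) K | i <- iota 1 n].
  by apply: eq_map => i; exact: sumn_count_mem.
elim: K Hc Hu => [|a K IH] /= Hc Hu.
  by elim: (iota 1 n) => //.
case/andP: Hc => Ha Hc; case/andP: Hu => Hua Hu.
rewrite -IH //.
have -> : sumn [seq ((i \in a) + count (fun col => i \in col) K)%N | i <- iota 1 n] =
   sumn [seq (i \in a) : nat | i <- iota 1 n] +
   sumn [seq count (fun col => i \in col) K | i <- iota 1 n].
  by elim: (iota 1 n) => //= x s ->; lia.
congr (_ + _); rewrite sumn_count -size_filter.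
apply: perm_size; apply: uniq_perm => //.
  exact: filter_uniq (iota_uniq _ _).
have /and3P[_ Hr _] := Ha.
move=> x; rewrite mem_filter mem_iota; case Hx: (x \in a); rewrite ?andbF //.
have := allP Hr x Hx; rewrite /=; lia.
Qed.

Lemma head_gL0 n m T (Q : filling n m) : size T = 0 -> head [::] (gL T Q) = [::].
Proof. by rewrite /gL => ->. Qed.

Lemma head_gL1 n m T (Q : filling n m) : 0 < size T -> head [::] (gL T Q) = col0Q T Q.
Proof. by rewrite /gL; case: (size T). Qed.

Unset Implicit Arguments.

Theorem corollary3p3 (R : comRingType) (n : nat) (beta : R) (T : tableau) :
  is_key T -> (nrows T <= n)%N ->
  rsvt_sum n beta T (ncells T) = lascoux n beta (wt_tab n (cap n T)).
Proof.
move=> Hk Hn.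
have G := key_goodcols Hk Hn.
have GK := goodkey_cap Hk Hn.
rewrite /lascoux (key_wt GK) (sumn_wt GK).
have -> : ncells (cap n T) = ncells T by rewrite /ncells shape_cap.
rewrite !rsvt_sumE [size (cap n T)]size_map.
apply: gsum_eq; first by rewrite shape_cap.
move=> Q HR; apply: tab_le_cap => //.
have [HT0|HT0] := posnP (size T).
  by apply: Kminus_cols; rewrite head_gL0.
have /andP[U1 U2] := L1_good HR HT0 Hn.
by apply: Kminus_cols; rewrite head_gL1.
Qed.
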